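(* Let $P=\langle p_1,\dots,p_n\rangle$ be a set of points in convex position. For any three points $p_i,p_l,p_j\in P$ ordered counterclockwise on the convex hull of $P$, and any two points $p,q$ with $p\in P(i,l)$, $q\in P(l,j)$, and $p,q\notin D(p_i,p_l,p_j)$, we have $$|pq|\ge\min\{|pp_i|,|pp_l|,|p_ip_j|,|p_lp_j|,|p_lp_i|,|qp_l|,|qp_j|\}.$$
   Context: $P$ is in convex position (every point is a hull vertex), no three points collinear, no four cocircular, listed counterclockwise along the hull. $P(i,l)$ denotes the points of $P$ strictly between $p_i$ and $p_l$ moving counterclockwise from $p_i$ to $p_l$. $D(p_i,p_l,p_j)$ is the disk whose boundary circle passes through $p_i,p_l,p_j$. $|xy|$ is Euclidean distance. *)

(* Defs.v *)
From mathcomp Require Import all_boot all_order all_algebra.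
Set Implicit Arguments. Unset Strict Implicit. Unset Printing Implicit Defensive.
Import Order.TTheory GRing.Theory Num.Theory.
Local Open Scope ring_scope.

Definition pt (R : rcfType) := (R * R)%type.

Definition dist (R : rcfType) (x y : pt R) : R :=
  Num.sqrt ((x.1 - y.1) ^+ 2 + (x.2 - y.2) ^+ 2).

(* Orientation determinant: > 0 iff a, b, c make a counterclockwise turn. *)
Definition orient (R : rcfType) (a b c : pt R) : R :=
  (b.1 - a.1) * (c.2 - a.2) - (b.2 - a.2) * (c.1 - a.1).

(* p_0, ..., p_{n-1} are in convex position, no three collinear, listed
   counterclockwise along the hull: every index-ordered triple is a
   strict counterclockwise turn. *)
Definition convex_ccw (R : rcfType) (n : nat) (P : 'I_n -> pt R) : Prop :=
  forall a b c : 'I_n, (a < b)%N -> (b < c)%N -> 0 < orient (P a) (P b) (P c).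

Definition cocircular (R : rcfType) (a b c d : pt R) : Prop :=
  exists o : pt R, dist o a = dist o b /\ dist o a = dist o c /\ dist o a = dist o d.

Definition no_four_cocircular (R : rcfType) (n : nat) (P : 'I_n -> pt R) : Prop :=
  forall a b c d : 'I_n, uniq [:: a; b; c; d] ->
    ~ cocircular (P a) (P b) (P c) (P d).

Definition in_disk (R : rcfType) (a b c x : pt R) : Prop :=
  exists o : pt R, dist o a = dist o b /\ dist o a = dist o c /\ dist o x <= dist o a.

(* cbetween i k l : index k is strictly between i and l when moving
   counterclockwise (cyclically increasing indices) from i to l,
   i.e. p_k \in P(i,l). *)
Definition cbetween (n : nat) (i k l : 'I_n) : bool :=
  if (i < l)%N then (i < k < l)%N else (i < k)%N || (k < l)%N.

(* Main.v *)
Require Import Defs.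
From mathcomp Require Import all_boot all_order all_algebra.
From mathcomp Require Import ring lra zify.
Import Order.TTheory GRing.Theory Num.Theory.
Set Implicit Arguments. Unset Strict Implicit.
Local Open Scope ring_scope.

Definition incirc (R : rcfType) (a b c d : pt R) : R :=
  let A1 := a.1 - d.1 in let A2 := a.2 - d.2 in let Aw := A1^+2 + A2^+2 in
  let B1 := b.1 - d.1 in let B2 := b.2 - d.2 in let Bw := B1^+2 + B2^+2 in
  let C1 := c.1 - d.1 in let C2 := c.2 - d.2 in let Cw := C1^+2 + C2^+2 in
  A1*(B2*Cw - Bw*C2) - A2*(B1*Cw - Bw*C1) + Aw*(B1*C2 - B2*C1).
Definition dot (R : rcfType) (a b c : pt R) : R :=
  (a.1 - c.1)*(b.1 - c.1) + (a.2 - c.2)*(b.2 - c.2).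
Definition sq (R : rcfType) (x y : pt R) : R := (x.1 - y.1) ^+ 2 + (x.2 - y.2) ^+ 2.

Lemma id1 (R : rcfType) (i a l b j : pt R) :
  orient i l j * incirc a l b i = orient i l a * incirc i l j b - orient i l b * incirc i l j a.
Proof. rewrite /orient /incirc /=. ring. Qed.
Lemma id2 (R : rcfType) (i a l b j : pt R) :
  orient l j i * incirc a l b j = - orient l j a * incirc i l j b + orient l j b * incirc i l j a.
Proof. rewrite /orient /incirc /=. ring. Qed.
Lemma id3 (R : rcfType) (a l b i : pt R) :
  incirc a l b i = - (dot a b l * orient a b i + dot a b i * orient a l b).
Proof. rewrite /orient /incirc /dot /=. ring. Qed.
Lemma orient_cyc (R : rcfType) (a b c : pt R) : orient a b c = orient b c a.
Proof. rewrite /orient; ring. Qed.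
Lemma orient_sw (R : rcfType) (a b c : pt R) : orient a c b = - orient a b c.
Proof. rewrite /orient; ring. Qed.

Lemma cb_cyc (n : nat) (x y z : 'I_n) : cbetween x y z -> x != z ->
  ((x<y<z) \/ (y<z<x) \/ (z<x<y))%N.
Proof.
rewrite /cbetween -val_eqE /=.
case: ifP => H1. by move=> -> _; left. case/orP=> H2 H4; lia.
Qed.

Lemma cyc_pos (R : rcfType) (n : nat) (P : 'I_n -> pt R) (hconv : convex_ccw P)
  (x y z : 'I_n) : ((x<y<z) \/ (y<z<x) \/ (z<x<y))%N -> 0 < orient (P x) (P y) (P z).
Proof.
case=> [/andP[h1 h2]|[/andP[h1 h2]|/andP[h1 h2]]]; first exact: hconv.
  by rewrite orient_cyc; apply: hconv.
by rewrite orient_cyc orient_cyc; apply: hconv.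
Qed.

Lemma sqrt_le (R : rcfType) (x y : pt R) (u v : pt R) :
  sq x y <= sq u v -> dist x y <= dist u v.
Proof. by move=> h; apply: ler_wsqrtr. Qed.

Lemma outside (R : rcfType) (a b c x : pt R) : 0 < orient a b c ->
  ~ in_disk a b c x -> incirc a b c x < 0.
Proof.
move=> ho hd; rewrite ltNge; apply/negP => hi; apply: hd.
set p1 := b.1 - a.1; set p2 := b.2 - a.2; set q1 := c.1 - a.1; set q2 := c.2 - a.2.
set d := 2 * orient a b c.
have dn : d != 0 by rewrite /d mulf_neq0 // gt_eqF.
have dn' : orient a b c != 0 by rewrite gt_eqF.
pose o : pt R := (a.1 + (q2 * (p1^+2 + p2^+2) - p2 * (q1^+2 + q2^+2)) / d,
                  a.2 + (p1 * (q1^+2 + q2^+2) - q1 * (p1^+2 + p2^+2)) / d).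
exists o; split; [|split].
- rewrite /dist; congr Num.sqrt; rewrite /o /= /d /p1 /p2 /q1 /q2 /orient; field.
  by move: dn'; rewrite /orient.
- rewrite /dist; congr Num.sqrt; rewrite /o /= /d /p1 /p2 /q1 /q2 /orient; field.
  by move: dn'; rewrite /orient.
- apply: ler_wsqrtr.
  have E : ((o.1 - x.1) ^+ 2 + (o.2 - x.2) ^+ 2) - ((o.1 - a.1) ^+ 2 + (o.2 - a.2) ^+ 2)
     = - incirc a b c x / orient a b c.
    rewrite /o /= /d /p1 /p2 /q1 /q2 /incirc /orient /=; field.
    by move: dn'; rewrite /orient.
  rewrite -subr_le0 E mulNr oppr_le0; apply: divr_ge0 => //; exact: ltW.
Qed.

Theorem lemma21 (R : rcfType) (n : nat) (P : 'I_n -> pt R)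
  (hconv : convex_ccw P) (hcoc : no_four_cocircular P)
  (i l j a b : 'I_n)
  (hij : i != j) (hilj : cbetween i l j)
  (ha : cbetween i a l) (hb : cbetween l b j)
  (hpa : ~ in_disk (P i) (P l) (P j) (P a))
  (hqb : ~ in_disk (P i) (P l) (P j) (P b)) :
  Num.min (dist (P a) (P i))
    (Num.min (dist (P a) (P l))
      (Num.min (dist (P i) (P j))
        (Num.min (dist (P l) (P j))
          (Num.min (dist (P l) (P i))
            (Num.min (dist (P b) (P l)) (dist (P b) (P j)))))))
  <= dist (P a) (P b).
Proof.
have c1 := cb_cyc hilj hij.
have hil : i != l by rewrite -val_eqE /=; lia.
have hlj : l != j by rewrite -val_eqE /=; lia.
have c2 := cb_cyc ha hil.
have c3 := cb_cyc hb hlj.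
have pos := cyc_pos hconv.
have o_ilj : 0 < orient (P i) (P l) (P j) by apply: pos; lia.
have o_ial : 0 < orient (P i) (P a) (P l) by apply: pos; lia.
have o_ilb : 0 < orient (P i) (P l) (P b) by apply: pos; lia.
have o_alb : 0 < orient (P a) (P l) (P b) by apply: pos; lia.
have o_abi : 0 < orient (P a) (P b) (P i) by apply: pos; lia.
have o_abj : 0 < orient (P a) (P b) (P j) by apply: pos; lia.
have o_lja : 0 < orient (P l) (P j) (P a) by apply: pos; lia.
have o_lbj : 0 < orient (P l) (P b) (P j) by apply: pos; lia.
have ia := outside o_ilj hpa.
have ib := outside o_ilj hqb.
rewrite !ge_min.
set A := P a; set B := P b; set I := P i; set L := P l; set J := P j.
have [hdot|hdot] := lerP (dot A B L) 0.
  have -> : dist A L <= dist A B.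
    apply: sqrt_le; rewrite /sq.
    have E : (A.1 - B.1) ^+ 2 + (A.2 - B.2) ^+ 2 =
      (A.1 - L.1) ^+ 2 + (A.2 - L.2) ^+ 2 + ((B.1 - L.1) ^+ 2 + (B.2 - L.2) ^+ 2)
      - 2 * dot A B L by rewrite /dot; ring.
    have s : 0 <= (B.1 - L.1) ^+ 2 + (B.2 - L.2) ^+ 2 by rewrite addr_ge0 // sqr_ge0.
    rewrite E; lra.
  by rewrite orbT.
have in_i : 0 < incirc A L B I.
  have E := id1 I A L B J.
  have : 0 < orient I L J * incirc A L B I.
    rewrite E (orient_sw I A L).
    have h1 : 0 < orient I A L * (- incirc I L J B) by apply: mulr_gt0; lra.
    have h2 : 0 < orient I L B * (- incirc I L J A) by apply: mulr_gt0; lra.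
    nra.
  by rewrite pmulr_rgt0.
have in_j : 0 < incirc A L B J.
  have E := id2 I A L B J.
  have : 0 < orient L J I * incirc A L B J.
    rewrite E (orient_sw L B J).
    have h1 : 0 < orient L J A * (- incirc I L J B) by apply: mulr_gt0; lra.
    have h2 : 0 < orient L B J * (- incirc I L J A) by apply: mulr_gt0; lra.
    nra.
  by rewrite -orient_cyc pmulr_rgt0.
have di : dot A B I < 0.
  move: in_i; rewrite id3 oppr_gt0 => h.
  have h1 : 0 < dot A B L * orient A B I by apply: mulr_gt0.
  have : dot A B I * orient A L B < 0 by lra.
  by rewrite pmulr_llt0.
have dj : dot A B J < 0.
  move: in_j; rewrite id3 oppr_gt0 => h.
  have h1 : 0 < dot A B L * orient A B J by apply: mulr_gt0.
  have : dot A B J * orient A L B < 0 by lra.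
  by rewrite pmulr_llt0.
have -> : dist I J <= dist A B.
  apply: sqrt_le; rewrite /sq.
  have E : (I.1 - J.1) ^+ 2 + (I.2 - J.2) ^+ 2 =
    2 * dot A B I + 2 * dot A B J + ((A.1 - B.1) ^+ 2 + (A.2 - B.2) ^+ 2)
    - ((I.1 + J.1 - A.1 - B.1) ^+ 2 + (I.2 + J.2 - A.2 - B.2) ^+ 2) by rewrite /dot; ring.
  have s : 0 <= (I.1 + J.1 - A.1 - B.1) ^+ 2 + (I.2 + J.2 - A.2 - B.2) ^+ 2 by rewrite addr_ge0 // sqr_ge0.
  rewrite E; lra.
by rewrite !orbT.
Qed.
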